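(* Let $T$ be a locally finite simplicial tree and let $G=\langle g_1,\dots,g_r\rangle$ be a discrete non-elementary subgroup of $\mathrm{Isom}(T)$. If $h\in G$ has infinite order, then $\langle g_i,h\rangle$ is non-elementary for some $i\in\{1,\dots,r\}$.
   Context: $\mathrm{Isom}(T)$ carries the topology of pointwise convergence. A subgroup is elementary if it stabilises a vertex, an end, or a pair of ends of $T$, and non-elementary otherwise. *)

(* Defs.v *)
(* A simplicial tree is given by its vertex type V and a
   symmetric irreflexive adjacency relation; Isom(T) = graph automorphisms. *)
From Stdlib Require Import List Arith.
Import ListNotations.
Set Implicit Arguments.

Section Tree.
Variable V : Type.
Variable adj : V -> V -> Prop.

Fixpoint is_walk (l : list V) : Prop :=
  match l with
  | x :: ((y :: _) as t) => adj x y /\ is_walk t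
  | _ => True
  end.

Fixpoint no_backtrack (l : list V) : Prop :=
  match l with
  | x :: ((_ :: z :: _) as t) => x <> z /\ no_backtrack t
  | _ => True
  end.

Definition reduced_walk (x y : V) (l : list V) : Prop :=
  is_walk l /\ no_backtrack l /\ head l = Some x /\ last l x = y /\ l <> [].

(* Serre's definition: a tree is a (simplicial) graph in which any two
   vertices are joined by exactly one reduced walk. *)
Definition is_tree : Prop :=
  (forall x y, adj x y -> adj y x) /\
  (forall x, ~ adj x x) /\
  (forall x y, exists l, reduced_walk x y l /\
     forall l', reduced_walk x y l' -> l' = l).

Definition locally_finite : Prop :=
  forall v, exists l : list V, forall w, adj v w -> In w l.

Definition is_isom (f : V -> V) : Prop :=
  (exists g : V -> V, (forall x, g (f x) = x) /\ (forall x, f (g x) = x)) /\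
  (forall x y, adj x y <-> adj (f x) (f y)).

Definition is_ray (r : nat -> V) : Prop :=
  forall n, adj (r n) (r (S n)) /\ r n <> r (S (S n)).

Definition same_end (r1 r2 : nat -> V) : Prop :=
  exists k m, forall n, r1 (n + k) = r2 (n + m).

(* subgroups of Isom(T) are given as predicates on functions V -> V,
   with membership understood up to extensional equality *)
Definition fixes_vertex (H : (V -> V) -> Prop) (v : V) : Prop :=
  forall g, H g -> g v = v.

Definition fixes_end (H : (V -> V) -> Prop) (r : nat -> V) : Prop :=
  forall g, H g -> same_end (fun n => g (r n)) r.

Definition fixes_end_pair (H : (V -> V) -> Prop) (r1 r2 : nat -> V) : Prop :=
  forall g, H g ->
    (same_end (fun n => g (r1 n)) r1 /\ same_end (fun n => g (r2 n)) r2) \/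
    (same_end (fun n => g (r1 n)) r2 /\ same_end (fun n => g (r2 n)) r1).

Definition elementary (H : (V -> V) -> Prop) : Prop :=
  (exists v, fixes_vertex H v) \/
  (exists r, is_ray r /\ fixes_end H r) \/
  (exists r1 r2, is_ray r1 /\ is_ray r2 /\ ~ same_end r1 r2 /\
                 fixes_end_pair H r1 r2).

End Tree.

Section Groups.
Variable V : Type.

Inductive gen_word (S : (V -> V) -> Prop) : (V -> V) -> Prop :=
| gw_id : gen_word S (fun x => x)
| gw_mul : forall s f, S s -> gen_word S f -> gen_word S (fun x => s (f x))
| gw_inv : forall s t f, S s -> (forall x, s (t x) = x /\ t (s x) = x) ->
    gen_word S f -> gen_word S (fun x => t (f x)).

Definition gen_subgroup (S : (V -> V) -> Prop) (h : V -> V) : Prop :=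
  exists f, gen_word S f /\ forall x, f x = h x.

(* discreteness for the topology of pointwise convergence (V discrete):
   every element g of G has a basic neighbourhood
   {g' | g' x = g x for x in F}, F finite, meeting G only in g *)
Definition discrete (G : (V -> V) -> Prop) : Prop :=
  forall g, G g -> exists F : list V, forall g', G g' ->
    (forall x, In x F -> g' x = g x) -> forall x, g' x = g x.

Definition infinite_order (h : V -> V) : Prop :=
  forall n, 0 < n -> exists x, Nat.iter n h x <> x.

End Groups.

(* Main.v *)
Require Import Defs.
From Stdlib Require Import List Arith Lia Classical.
Import ListNotations.
Set Implicit Arguments.
Unset Strict Implicit.



Lemma last_indep (V:Type) (a:V) l d d' : last (a::l) d = last (a::l) d'.
Proof. revert a; induction l as [|b l IH]; intros a; [reflexivity|].
  change (last (b::l) d = last (b::l) d'). apply IH. Qed.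

Lemma nb_tail (V:Type) (a:V) l : no_backtrack (a::l) -> no_backtrack l.
Proof. destruct l as [|b [|c l]]; simpl; tauto. Qed.

Lemma walk_tail (V:Type) adj (a:V) l : is_walk adj (a::l) -> is_walk adj l.
Proof. destruct l as [|b l]; simpl; tauto. Qed.

Lemma tree_sym V (adj:V->V->Prop) (HT: is_tree adj) x y : adj x y -> adj y x.
Proof. destruct HT as [H _]; auto. Qed.
Lemma tree_irr V (adj:V->V->Prop) (HT: is_tree adj) x : ~ adj x x.
Proof. destruct HT as [_ [H _]]; auto. Qed.
Lemma tree_ex V (adj:V->V->Prop) (HT: is_tree adj) x y : exists l, reduced_walk adj x y l.
Proof. destruct HT as [_ [_ H]]. destruct (H x y) as [l [? ?]]; eauto. Qed.
Lemma tree_uniq V (adj:V->V->Prop) (HT: is_tree adj) x y l1 l2 :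
  reduced_walk adj x y l1 -> reduced_walk adj x y l2 -> l1 = l2.
Proof. destruct HT as [_ [_ H]]. destruct (H x y) as [l [? Hu]].
  intros; rewrite (Hu l1), (Hu l2); auto. Qed.

Lemma red_single V (adj:V->V->Prop) x : reduced_walk adj x x [x].
Proof. repeat split; simpl; auto; discriminate. Qed.

Lemma prepend V (adj:V->V->Prop) x z y l :
  reduced_walk adj z y l -> adj x z ->
  exists R, reduced_walk adj x y R /\ (forall v, In v R -> v = x \/ In v l).
Proof.
  intros [Hw [Hnb [Hh [Hl Hne]]]] Hxz.
  destruct l as [|z' l]; [congruence|]. simpl in Hh; inversion Hh; subst z'.
  destruct l as [|w rest].
  - exists [x; z]. split; [repeat split; simpl; auto; discriminate|].
    simpl; intros v [?|[?|[]]]; auto.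
  - destruct (classic (w = x)) as [->|Hwx].
    + exists (x :: rest). split.
      * split; [|split; [|split; [|split]]].
        -- exact (walk_tail Hw).
        -- exact (nb_tail Hnb).
        -- reflexivity.
        -- rewrite <- Hl. simpl. destruct rest; auto. apply last_indep.
        -- discriminate.
      * intros v Hv; right; simpl; auto.
    + exists (x :: z :: w :: rest). split.
      * split; [|split; [|split; [|split]]].
        -- change (adj x z /\ is_walk adj (z::w::rest)); split; auto.
        -- change (x <> w /\ no_backtrack (z::w::rest)); split; [congruence| exact Hnb].
        -- reflexivity.
        -- rewrite <- Hl. change (last (z::w::rest) x = last (z::w::rest) z); apply last_indep.
        -- discriminate.
      * intros v [Hv|Hv]; auto.
Qed.

Inductive wk (V:Type) (adj:V->V->Prop) (P: V -> Prop) : V -> V -> Prop :=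
| wk_refl x : P x -> wk adj P x x
| wk_step x z y : P x -> adj x z -> wk adj P z y -> wk adj P x y.

Lemma wk_red V (adj:V->V->Prop) (HT:is_tree adj) P x y :
  wk adj P x y -> forall R, reduced_walk adj x y R -> forall v, In v R -> P v.
Proof.
  induction 1; intros R HR v Hv.
  - rewrite (tree_uniq HT HR (red_single adj x)) in Hv. destruct Hv as [<-|[]]; auto.
  - destruct (tree_ex HT z y) as [R' HR'].
    destruct (prepend HR' H0) as [R0 [HR0 Hin]].
    rewrite (tree_uniq HT HR HR0) in Hv. destruct (Hin v Hv) as [->|Hv']; eauto.
Qed.

Lemma wk_Pl V (adj:V->V->Prop) P x y : wk adj P x y -> P x.
Proof. destruct 1; auto. Qed.
Lemma wk_Pr V (adj:V->V->Prop) P x y : wk adj P x y -> P y.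
Proof. induction 1; auto. Qed.
Lemma wk_trans V (adj:V->V->Prop) P x y z : wk adj P x y -> wk adj P y z -> wk adj P x z.
Proof. induction 1; intros; auto. eapply wk_step; eauto. Qed.
Lemma wk_mono V (adj:V->V->Prop) (P Q:V->Prop) x y : (forall v, P v -> Q v) -> wk adj P x y -> wk adj Q x y.
Proof. intros HPQ; induction 1. constructor; auto. eapply wk_step; eauto. Qed.
Lemma wk_rev V (adj:V->V->Prop) (HT:is_tree adj) P x y : wk adj P x y -> wk adj P y x.
Proof. induction 1. constructor; auto.
  eapply wk_trans; [exact IHwk|]. eapply wk_step; [exact (wk_Pl H1) | apply (tree_sym HT); exact H0 | constructor; exact H]. Qed.

Definition lwalk V (adj:V->V->Prop) x y l := is_walk adj l /\ head l = Some x /\ last l x = y.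

Lemma lwalk_wk V (adj:V->V->Prop) l : forall x y, lwalk adj x y l -> wk adj (fun v => In v l) x y.
Proof.
  induction l as [|a l IH]; intros x y [Hw [Hh Hl]]; [discriminate|].
  simpl in Hh; inversion Hh; subst a.
  destruct l as [|b l].
  - simpl in Hl; subst. constructor; simpl; auto.
  - destruct Hw as [Hab Hw]. eapply wk_step; [simpl; auto| exact Hab|].
    apply wk_mono with (P := fun v => In v (b::l)); [simpl; auto|].
    apply IH. repeat split; auto. rewrite <- Hl. simpl. apply last_indep.
Qed.

Lemma red_lwalk V (adj:V->V->Prop) x y l : reduced_walk adj x y l -> lwalk adj x y l.
Proof. intros [? [? [? [? ?]]]]; repeat split; auto. Qed.

Lemma lwalk_map V (adj:V->V->Prop) (f:V->V) (Hf: forall a b, adj a b -> adj (f a) (f b)) l :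
  forall x y, lwalk adj x y l -> lwalk adj (f x) (f y) (map f l).
Proof.
  induction l as [|a l IH]; intros x y [Hw [Hh Hl]]; [discriminate|].
  simpl in Hh; inversion Hh; subst a.
  destruct l as [|b l].
  - simpl in Hl; subst. repeat split; simpl; auto.
  - destruct Hw as [Hab Hw].
    assert (lwalk adj b y (b::l)) as Hb by (repeat split; auto; rewrite <- Hl; simpl; apply last_indep).
    destruct (IH _ _ Hb) as [Hw' [Hh' Hl']].
    repeat split; simpl in *; auto.
    rewrite <- Hl'. simpl. apply last_indep.
Qed.

Definition seg V (r:nat->V) i n := map r (seq i (S n)).

Lemma seg_walk V (adj:V->V->Prop) r (Hr: is_ray adj r) n : forall i, is_walk adj (seg r i n) /\ no_backtrack (seg r i n).
Proof.
  induction n as [|n IH]; intros i; [simpl; auto|].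
  unfold seg in *. change (seq i (S (S n))) with (i :: seq (S i) (S n)).
  destruct (IH (S i)) as [Hw Hnb].
  change (seq (S i) (S n)) with (S i :: seq (S (S i)) n) in *.
  simpl map in *. split.
  - split; [apply Hr|exact Hw].
  - destruct n as [|n]; simpl; auto. split; [apply Hr|exact Hnb].
Qed.

Lemma seg_last V (r:nat->V) n : forall i d, last (seg r i n) d = r (i+n).
Proof.
  induction n as [|n IH]; intros i d; [simpl; f_equal; lia|].
  unfold seg in *. change (seq i (S (S n))) with (i :: seq (S i) (S n)).
  change (map r (i :: seq (S i) (S n))) with (r i :: map r (seq (S i) (S n))).
  change (seq (S i) (S n)) with (S i :: seq (S (S i)) n).
  change (map r (S i :: seq (S (S i)) n)) with (r (S i) :: map r (seq (S (S i)) n)).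
  rewrite (@last_indep V (r i) _ d (r (S i))). change (last (map r (seq (S i) (S n))) (r (S i)) = r (i + S n)).
  rewrite IH. f_equal; lia.
Qed.

Lemma seg_red V (adj:V->V->Prop) r (Hr: is_ray adj r) i n : reduced_walk adj (r i) (r (i+n)) (seg r i n).
Proof.
  destruct (seg_walk Hr n i). split; [|split; [|split; [|split]]]; auto.
  - apply seg_last.
  - unfold seg; simpl; discriminate.
Qed.

Lemma seg_in V (r:nat->V) i n j : i <= j <= i + n -> In (r j) (seg r i n).
Proof. intros. unfold seg. apply in_map. apply in_seq. lia. Qed.

Lemma seg_len V (r:nat->V) i n : length (seg r i n) = S n.
Proof. unfold seg. rewrite length_map, length_seq. auto. Qed.

Lemma ray_inj V (adj:V->V->Prop) (HT:is_tree adj) r (Hr: is_ray adj r) i j : r i = r j -> i = j.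
Proof.
  intros E. destruct (lt_eq_lt_dec i j) as [[H|H]|H]; auto.
  - exfalso. pose proof (seg_red Hr i (j - i)). replace (i + (j-i)) with j in H0 by lia.
    rewrite <- E in H0. pose proof (tree_uniq HT H0 (red_single adj (r i))).
    apply (f_equal (@length V)) in H1. rewrite seg_len in H1. simpl in H1. lia.
  - exfalso. pose proof (seg_red Hr j (i - j)). replace (j + (i-j)) with i in H0 by lia.
    rewrite E in H0. pose proof (tree_uniq HT H0 (red_single adj (r j))).
    apply (f_equal (@length V)) in H1. rewrite seg_len in H1. simpl in H1. lia.
Qed.

Lemma ray_adj_lt V (adj:V->V->Prop) (HT:is_tree adj) r (Hr: is_ray adj r) i j :
  i < j -> adj (r i) (r j) -> j = S i.
Proof.
  intros H A. pose proof (seg_red Hr i (j - i)). replace (i + (j-i)) with j in H0 by lia.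
  assert (reduced_walk adj (r i) (r j) [r i; r j]) by (repeat split; simpl; auto; discriminate).
  pose proof (tree_uniq HT H0 H1). apply (f_equal (@length V)) in H2. rewrite seg_len in H2. simpl in H2. lia.
Qed.

Lemma ray_adj V (adj:V->V->Prop) (HT:is_tree adj) r (Hr: is_ray adj r) i j :
  adj (r i) (r j) -> j = S i \/ i = S j.
Proof.
  intros A. destruct (lt_eq_lt_dec i j) as [[H|H]|H].
  - left. eapply ray_adj_lt; eauto.
  - subst. exfalso. exact (tree_irr HT A).
  - right. eapply ray_adj_lt; eauto. apply (tree_sym HT); auto.
Qed.

Lemma ray_wk_fwd V (adj:V->V->Prop) r (Hr: is_ray adj r) a n :
  wk adj (fun v => exists j, v = r j) (r a) (r (a+n)).
Proof.
  revert a; induction n; intros a.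
  - rewrite Nat.add_0_r. constructor; eauto.
  - eapply wk_step; [eauto| apply (Hr a)|]. replace (a + S n) with (S a + n) by lia. apply IHn.
Qed.

Lemma ray_wk V (adj:V->V->Prop) (HT:is_tree adj) r (Hr: is_ray adj r) a b :
  wk adj (fun v => exists j, v = r j) (r a) (r b).
Proof.
  destruct (le_lt_dec a b).
  - replace b with (a + (b-a)) by lia. apply ray_wk_fwd; auto.
  - apply wk_rev; auto. replace a with (b + (a-b)) by lia. apply ray_wk_fwd; auto.
Qed.

Lemma same_end_of V (adj:V->V->Prop) (HT:is_tree adj) r1 r2 (H1: is_ray adj r1) (H2: is_ray adj r2) i0 :
  (forall i, i0 <= i -> exists j, r1 i = r2 j) -> same_end r1 r2.
Proof.
  intros H.
  destruct (H i0 (le_n _)) as [j0 E0].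
  destruct (H (S i0) (Nat.le_succ_diag_r _)) as [j1 E1].
  assert (A01: adj (r2 j0) (r2 j1)) by (rewrite <- E0, <- E1; apply H1).
  destruct (ray_adj HT H2 A01) as [Hj|Hj].
  - exists i0, j0.
    assert (forall n, r1 (n + i0) = r2 (n + j0) /\ r1 (S n + i0) = r2 (S n + j0)) as G; [|intro n; apply G].
    intro n; induction n as [|n IH].
    + simpl. split; auto. rewrite E1, Hj. auto.
    + destruct IH as [Ia Ib]. split; auto.
      destruct (H (S (S n) + i0)) as [j E]; [lia|].
      assert (adj (r2 (S n + j0)) (r2 j)) by (rewrite <- Ib, <- E; apply H1).
      destruct (ray_adj HT H2 H0) as [Hj'|Hj'].
      * rewrite E, Hj'. f_equal; lia.
      * exfalso. destruct (H1 (n + i0)) as [_ Hne]. apply Hne.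
        replace (S (S (n + i0))) with (S (S n) + i0) by lia. rewrite E, Ia.
        f_equal. lia.
  - exfalso.
    assert (forall b t a, r1 (t + i0) = r2 a -> r1 (S t + i0) = r2 b -> a = S b -> False) as G.
    { induction b as [|b IH]; intros t a Ea Eb Hab.
      - destruct (H (S (S t) + i0)) as [j E]; [lia|].
        assert (adj (r2 0) (r2 j)) by (rewrite <- Eb, <- E; apply H1).
        destruct (ray_adj HT H2 H0) as [Hj'|Hj']; [|discriminate].
        destruct (H1 (t + i0)) as [_ Hne]. apply Hne.
        replace (S (S (t + i0))) with (S (S t) + i0) by lia. rewrite E, Ea, Hj', Hab. auto.
      - destruct (H (S (S t) + i0)) as [j E]; [lia|].
        assert (adj (r2 (S b)) (r2 j)) by (rewrite <- Eb, <- E; apply H1).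
        destruct (ray_adj HT H2 H0) as [Hj'|Hj'].
        + destruct (H1 (t + i0)) as [_ Hne]. apply Hne.
          replace (S (S (t + i0))) with (S (S t) + i0) by lia. rewrite E, Ea, Hj', Hab. auto.
        + injection Hj' as Hj'. subst j. apply (IH (S t) (S b)); auto. }
    apply (G j1 0 j0); simpl; auto.
Qed.

Lemma nodup_map_inj A B (f:A->B) (Hf: forall a b, f a = f b -> a = b) l :
  NoDup l -> NoDup (map f l).
Proof.
  induction 1; simpl; constructor; auto.
  intros Hin. apply in_map_iff in Hin. destruct Hin as [y [E Hy]]. apply Hf in E; subst; auto.
Qed.

Lemma in_le_max l i : In i l -> i <= list_max l.
Proof. intros H. assert (Forall (fun k => k <= list_max l) l) by (apply list_max_le; auto).
  rewrite Forall_forall in H0; auto. Qed.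

Lemma build_idx (E : nat -> Prop) : (forall i0, exists i, i0 <= i /\ E i) ->
  forall M, exists l, NoDup l /\ length l = M /\ forall i, In i l -> E i.
Proof.
  intros H M. induction M as [|M IH].
  - exists []. repeat split; auto. constructor. intros i [].
  - destruct IH as [l [Hn [Hl HE]]]. destruct (H (S (list_max l))) as [i [Hi Ei]].
    exists (i :: l). split; [|split].
    + constructor; auto. intros Hin. apply in_le_max in Hin. lia.
    + simpl; auto.
    + intros j [<-|Hj]; auto.
Qed.

Lemma close_same V (adj:V->V->Prop) (HT:is_tree adj) r1 r2 (H1: is_ray adj r1) (H2: is_ray adj r2) C :
  (forall N, exists i j Q, N <= i /\ lwalk adj (r1 i) (r2 j) Q /\ length Q <= C) -> same_end r1 r2.
Proof.
  intros Hc.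
  assert (exists i0, forall i, i0 <= i -> exists j, r1 i = r2 j) as [i0 Hi0].
  { apply NNPP; intro Hn.
    assert (forall i0, exists i, i0 <= i /\ ~ exists j, r1 i = r2 j) as HE.
    { intros i0. apply NNPP; intro Hn'. apply Hn. exists i0. intros i Hi. apply NNPP; intro.
      apply Hn'; eauto. }
    destruct (tree_ex HT (r1 0) (r2 0)) as [Z HZ].
    destruct (build_idx HE (S (length Z + C))) as [l [Hnd [Hl HEl]]].
    destruct (Hc (list_max l)) as [I [J [Q [HI [HQ HlQ]]]]].
    set (P := fun v => In v Z \/ (exists j, v = r2 j) \/ In v Q).
    assert (wk adj P (r1 0) (r1 I)) as W.
    { eapply wk_trans.
      - apply (wk_mono (P := fun v => In v Z)). unfold P; auto.
        apply lwalk_wk. apply red_lwalk; exact HZ.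
      - eapply wk_trans.
        + apply (wk_mono (P := fun v => exists j, v = r2 j)). unfold P; auto.
          apply (ray_wk HT H2 0 J).
        + apply (wk_mono (P := fun v => In v Q)). unfold P; auto.
          apply wk_rev; auto. apply lwalk_wk; auto. }
    pose proof (wk_red HT W (seg_red H1 0 I)) as HW.
    assert (incl (map r1 l) (Z ++ Q)).
    { intros v Hv. apply in_map_iff in Hv. destruct Hv as [i [<- Hi]].
      assert (In (r1 i) (seg r1 0 I)) by (apply seg_in; pose proof (in_le_max Hi); lia).
      destruct (HW _ H) as [A|[A|A]].
      - apply in_or_app; auto.
      - exfalso. apply (HEl i Hi). exact A.
      - apply in_or_app; auto. }
    apply NoDup_incl_length in H.
    - rewrite length_map, length_app in H. lia.
    - apply nodup_map_inj; auto. intros a b Eab; exact (ray_inj HT H1 Eab). }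
  eapply same_end_of; eauto.
Qed.

Definition Adv V (f:V->V) (r:nat->V) k m := forall n, f (r (n+k)) = r (n+m).

Definition adjp V (adj:V->V->Prop) (f:V->V) := forall a b, adj a b -> adj (f a) (f b).

Lemma adv_iter V (A:V->V) r k m : Adv A r k m -> k <= m -> forall N, Nat.iter N A (r k) = r (k + N*(m-k)).
Proof.
  intros H Hkm N. induction N as [|N IH]; simpl.
  - f_equal; lia.
  - rewrite IH. replace (k + N*(m-k)) with (N*(m-k) + k) by lia. rewrite H. f_equal. lia.
Qed.

Lemma iter_adjp V (adj:V->V->Prop) A : adjp adj A -> forall N, adjp adj (Nat.iter N A).
Proof. intros H N; induction N; intros a b Hab; simpl; auto. Qed.

Lemma close_pos V (adj:V->V->Prop) (HT:is_tree adj) r1 r2 (H1: is_ray adj r1) (H2: is_ray adj r2) A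
  (HA: adjp adj A) k1 m1 k2 m2 : Adv A r1 k1 m1 -> k1 < m1 -> Adv A r2 k2 m2 -> k2 < m2 -> same_end r1 r2.
Proof.
  intros A1 L1 A2 L2.
  destruct (tree_ex HT (r1 k1) (r2 k2)) as [P HP].
  apply (close_same HT H1 H2 (C := length P)).
  intros N. exists (k1 + N*(m1-k1)), (k2 + N*(m2-k2)), (map (Nat.iter N A) P).
  split; [nia|split].
  - rewrite <- (adv_iter A1), <- (adv_iter A2); try lia.
    apply lwalk_map; [apply iter_adjp; auto|]. apply red_lwalk; auto.
  - rewrite length_map; auto.
Qed.

Lemma adv_inv V (A B:V->V) r k m : (forall x, B (A x) = x) -> Adv A r k m -> Adv B r m k.
Proof. intros HBA H n. rewrite <- H. auto. Qed.

Lemma pair_same V (adj:V->V->Prop) (HT:is_tree adj) r1 r2 (H1: is_ray adj r1) (H2: is_ray adj r2) A B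
  (HA: adjp adj A) (HB: adjp adj B) (HBA: forall x, B (A x) = x) k1 m1 k2 m2 :
  Adv A r1 k1 m1 -> Adv A r2 k2 m2 -> (k1 < m1 /\ k2 < m2) \/ (m1 < k1 /\ m2 < k2) -> same_end r1 r2.
Proof.
  intros A1 A2 [[L1 L2]|[L1 L2]].
  - exact (close_pos HT H1 H2 HA A1 L1 A2 L2).
  - exact (close_pos HT H1 H2 HB (adv_inv HBA A1) L1 (adv_inv HBA A2) L2).
Qed.

Lemma three_ends V (adj:V->V->Prop) (HT:is_tree adj) A B
  (HA: adjp adj A) (HB: adjp adj B) (HBA: forall x, B (A x) = x) x y z :
  is_ray adj x -> is_ray adj y -> is_ray adj z ->
  same_end (fun n => A (x n)) x -> same_end (fun n => A (y n)) y -> same_end (fun n => A (z n)) z ->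
  ~ same_end x y -> ~ same_end x z -> ~ same_end y z -> exists v, A v = v.
Proof.
  intros Rx Ry Rz [kx [mx Ex]] [ky [my Ey]] [kz [mz Ez]] Nxy Nxz Nyz.
  assert (Ax: Adv A x kx mx) by exact Ex.
  assert (Ay: Adv A y ky my) by exact Ey.
  assert (Az: Adv A z kz mz) by exact Ez.
  destruct (lt_eq_lt_dec kx mx) as [[Lx|Lx]|Lx];
  [| exists (x kx); specialize (Ex 0); simpl in Ex; rewrite Ex; subst; auto |];
  (destruct (lt_eq_lt_dec ky my) as [[Ly|Ly]|Ly];
  [| exists (y ky); specialize (Ey 0); simpl in Ey; rewrite Ey; subst; auto |]);
  (destruct (lt_eq_lt_dec kz mz) as [[Lz|Lz]|Lz];
  [| exists (z kz); specialize (Ez 0); simpl in Ez; rewrite Ez; subst; auto |]);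
  exfalso;
  first [ apply Nxy; apply (pair_same HT Rx Ry HA HB HBA Ax Ay); lia
        | apply Nxz; apply (pair_same HT Rx Rz HA HB HBA Ax Az); lia
        | apply Nyz; apply (pair_same HT Ry Rz HA HB HBA Ay Az); lia ].
Qed.


Lemma se_refl V (r:nat->V) : same_end r r.
Proof. exists 0, 0; auto. Qed.
Lemma se_sym V (r1 r2:nat->V) : same_end r1 r2 -> same_end r2 r1.
Proof. intros [k [m H]]; exists m, k; auto. Qed.
Lemma se_trans V (r1 r2 r3:nat->V) : same_end r1 r2 -> same_end r2 r3 -> same_end r1 r3.
Proof. intros [k [m H]] [k' [m' H']]. exists (k+k'), (m+m'). intros n.
  replace (n + (k+k')) with ((n+k') + k) by lia. rewrite H.
  replace (n + k' + m) with ((n+m) + k') by lia. rewrite H'. f_equal; lia. Qed.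
Lemma se_map V (f:V->V) (r1 r2:nat->V) : same_end r1 r2 -> same_end (fun n => f (r1 n)) (fun n => f (r2 n)).
Proof. intros [k [m H]]; exists k, m; intros; rewrite H; auto. Qed.
Lemma se_ext V (a a' b:nat->V) : same_end a b -> (forall n, a n = a' n) -> same_end a' b.
Proof. intros [k [m H]] E; exists k, m; intros; rewrite <- E; auto. Qed.

Lemma gw_comp V (S:(V->V)->Prop) w1 w2 : gen_word S w1 -> gen_word S w2 -> gen_word S (fun x => w1 (w2 x)).
Proof. intros H1 H2; induction H1.
  - exact H2.
  - exact (gw_mul s H IHgen_word).
  - exact (gw_inv s t H H0 IHgen_word).
Qed.

Lemma G_id V (S:(V->V)->Prop) : gen_subgroup S (fun x => x).
Proof. exists (fun x => x); split; [constructor|auto]. Qed.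
Lemma G_ext V (S:(V->V)->Prop) f g : gen_subgroup S f -> (forall x, f x = g x) -> gen_subgroup S g.
Proof. intros [w [Hw E]] E'; exists w; split; auto; intros; rewrite E; auto. Qed.
Lemma G_gen V (S:(V->V)->Prop) s : S s -> gen_subgroup S s.
Proof. intros H; exists (fun x => s x); split; auto. exact (gw_mul s H (gw_id S)). Qed.
Lemma G_comp V (S:(V->V)->Prop) f g : gen_subgroup S f -> gen_subgroup S g -> gen_subgroup S (fun x => f (g x)).
Proof. intros [w [Hw E]] [w' [Hw' E']]. exists (fun x => w (w' x)); split.
  apply gw_comp; auto. intros; rewrite E', E; auto. Qed.
Lemma G_iter V (S:(V->V)->Prop) f : gen_subgroup S f -> forall n, gen_subgroup S (Nat.iter n f).
Proof. intros H n; induction n; simpl. apply G_id. apply (G_comp H IHn). Qed.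

Lemma gen_ind V (S:(V->V)->Prop) (Q:(V->V)->Prop) :
  Q (fun x => x) ->
  (forall s f, S s -> Q f -> Q (fun x => s (f x))) ->
  (forall s t f, S s -> (forall x, s (t x) = x /\ t (s x) = x) -> Q f -> Q (fun x => t (f x))) ->
  (forall f g, Q f -> (forall x, f x = g x) -> Q g) ->
  forall f, gen_subgroup S f -> Q f.
Proof. intros H0 H1 H2 H3 f [w [Hw E]]. apply (H3 w); auto. clear E. induction Hw; eauto. Qed.

Definition isinv V (f g : V -> V) := (forall x, g (f x) = x) /\ (forall x, f (g x) = x).

Lemma isom_adjp V (adj:V->V->Prop) f : is_isom adj f -> adjp adj f.
Proof. intros [_ H] a b; apply H. Qed.

Lemma isom_inv V (adj:V->V->Prop) f : is_isom adj f -> exists g, isinv f g /\ adjp adj g.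
Proof. intros [[g [H1 H2]] H]. exists g; split; [split; auto|].
  intros a b Hab. apply H. rewrite !H2. auto. Qed.

Lemma G_props V (adj:V->V->Prop) (S:(V->V)->Prop) (HS: forall s, S s -> is_isom adj s) :
  forall f, gen_subgroup S f -> adjp adj f /\ exists g, gen_subgroup S g /\ isinv f g /\ adjp adj g.
Proof.
  apply gen_ind.
  - split; [intros a b; auto|]. exists (fun x => x); split; [apply G_id|split; [split; auto|intros a b; auto]].
  - intros s f Hs [Hf [g [Hg [[I1 I2] Ag]]]].
    destruct (isom_inv (HS s Hs)) as [t [[T1 T2] At]].
    split; [intros a b Hab; apply (isom_adjp (HS s Hs)); auto|].
    exists (fun x => g (t x)); split; [|split; [split|]].
    + apply G_comp; auto. apply (G_ext (f := fun x => t ((fun x => x) x))); auto.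
      exists (fun x => t ((fun x => x) x)); split; auto. apply gw_inv with s; auto. constructor.
    + intros; rewrite T1, I1; auto.
    + intros; rewrite I2, T2; auto.
    + intros a b Hab; auto.
  - intros s t f Hs Hst [Hf [g [Hg [[I1 I2] Ag]]]].
    destruct (isom_inv (HS s Hs)) as [t' [[T1 T2] At]].
    assert (Et: forall x, t x = t' x). { intros x. rewrite <- (T2 x) at 1. rewrite (proj2 (Hst (t' x))). auto. }
    split; [intros a b Hab; rewrite !Et; auto|].
    exists (fun x => g (s x)); split; [|split; [split|]].
    + apply G_comp; auto. apply G_gen; auto.
    + intros; rewrite (proj1 (Hst _)), I1; auto.
    + intros; rewrite I2, (proj2 (Hst _)); auto.
    + intros a b Hab; apply Ag, (isom_adjp (HS s Hs)); auto.
  - intros f g [Hf [h [Hh [[I1 I2] Ah]]]] E. split.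
    + intros a b Hab; rewrite <- !E; auto.
    + exists h; split; auto. split; [split|]; auto; intros; rewrite <- E; auto.
Qed.

Lemma G_adjp V (adj:V->V->Prop) (S:(V->V)->Prop) (HS: forall s, S s -> is_isom adj s) f :
  gen_subgroup S f -> adjp adj f.
Proof. intros H; exact (proj1 (G_props HS H)). Qed.

Lemma G_inv V (adj:V->V->Prop) (S:(V->V)->Prop) (HS: forall s, S s -> is_isom adj s) f :
  gen_subgroup S f -> exists g, gen_subgroup S g /\ isinv f g /\ adjp adj g.
Proof. intros H; exact (proj2 (G_props HS H)). Qed.

Lemma G_isom V (adj:V->V->Prop) (S:(V->V)->Prop) (HS: forall s, S s -> is_isom adj s) f :
  gen_subgroup S f -> is_isom adj f.
Proof.
  intros H. destruct (G_inv HS H) as [g [_ [[I1 I2] Ag]]]. split.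
  - exists g; split; auto.
  - intros x y; split; [apply (G_adjp HS H)|]. intros A. rewrite <- (I1 x), <- (I1 y). apply Ag; auto.
Qed.

Lemma G_sub V (adj:V->V->Prop) (S1 S2:(V->V)->Prop) (HS2: forall s, S2 s -> is_isom adj s) :
  (forall s, S1 s -> gen_subgroup S2 s) -> forall f, gen_subgroup S1 f -> gen_subgroup S2 f.
Proof.
  intros H. apply gen_ind.
  - apply G_id.
  - intros s f Hs Hf. apply G_comp; auto.
  - intros s t f Hs Hst Hf. apply G_comp; auto.
    destruct (G_inv HS2 (H s Hs)) as [g [Hg [[I1 I2] _]]].
    apply (G_ext Hg). intros x. rewrite <- (proj2 (Hst (g x))) at 1. rewrite I2. reflexivity.
  - intros; eapply G_ext; eauto.
Qed.

Lemma G_fix_end V (S:(V->V)->Prop) r :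
  (forall s, S s -> same_end (fun n => s (r n)) r) ->
  forall f, gen_subgroup S f -> same_end (fun n => f (r n)) r.
Proof.
  intros H. apply gen_ind.
  - apply se_refl.
  - intros s f Hs Hf. eapply se_trans; [apply (se_map s Hf)|]. auto.
  - intros s t f Hs Hst Hf. eapply se_trans; [apply (se_map t Hf)|].
    apply se_sym. apply (se_ext (a := fun n => t (s (r n)))); [apply se_map; auto|].
    intros; apply Hst.
  - intros f g Hf E. apply (se_ext (a := fun n => f (r n))); auto.
Qed.

Definition pres_pair V (f:V->V) (r1 r2:nat->V) :=
  (same_end (fun n => f (r1 n)) r1 /\ same_end (fun n => f (r2 n)) r2) \/
  (same_end (fun n => f (r1 n)) r2 /\ same_end (fun n => f (r2 n)) r1).

Lemma G_fix_pair V (S:(V->V)->Prop) r1 r2 :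
  (forall s, S s -> pres_pair s r1 r2) ->
  forall f, gen_subgroup S f -> pres_pair f r1 r2.
Proof.
  intros H. apply gen_ind.
  - left; split; apply se_refl.
  - intros s f Hs Hf. destruct (H s Hs) as [[A1 A2]|[A1 A2]]; destruct Hf as [[B1 B2]|[B1 B2]];
      [left|right|right|left]; split;
      solve [ eapply se_trans; [apply (se_map s B1)|]; auto
            | eapply se_trans; [apply (se_map s B2)|]; auto ].
  - intros s t f Hs Hst Hf.
    assert (T: pres_pair t r1 r2).
    { destruct (H s Hs) as [[A1 A2]|[A1 A2]]; [left|right]; split; apply se_sym;
      [ apply (se_ext (a := fun n => t (s (r1 n)))); [apply se_map; auto| intros; apply Hst]
      | apply (se_ext (a := fun n => t (s (r2 n)))); [apply se_map; auto| intros; apply Hst]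
      | apply (se_ext (a := fun n => t (s (r2 n)))); [apply se_map; auto| intros; apply Hst]
      | apply (se_ext (a := fun n => t (s (r1 n)))); [apply se_map; auto| intros; apply Hst] ]. }
    destruct T as [[A1 A2]|[A1 A2]]; destruct Hf as [[B1 B2]|[B1 B2]];
      [left|right|right|left]; split;
      solve [ eapply se_trans; [apply (se_map t B1)|]; auto
            | eapply se_trans; [apply (se_map t B2)|]; auto ].
  - intros f g [[A1 A2]|[A1 A2]] E; [left|right]; split;
    solve [apply (se_ext (a := fun n => f (r1 n))); auto | apply (se_ext (a := fun n => f (r2 n))); auto].
Qed.

Inductive rn V (adj:V->V->Prop) : nat -> V -> V -> Prop :=
| rn0 x : rn adj 0 x x
| rnS n x z y : adj x z -> rn adj n z y -> rn adj (S n) x y.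

Lemma lwalk_rn V (adj:V->V->Prop) l : forall x y, lwalk adj x y l -> rn adj (length l - 1) x y.
Proof.
  induction l as [|a l IH]; intros x y [Hw [Hh Hl]]; [discriminate|].
  simpl in Hh; inversion Hh; subst a.
  destruct l as [|b l].
  - simpl in Hl; subst. constructor.
  - destruct Hw as [Hab Hw].
    assert (lwalk adj b y (b::l)) as Hb by (repeat split; auto; rewrite <- Hl; simpl; apply last_indep).
    specialize (IH _ _ Hb). simpl in *. replace (length l - 0) with (S (length l - 0) - 1) by lia.
    econstructor; eauto. simpl. rewrite Nat.sub_0_r in *. auto.
Qed.

Lemma tree_rn V (adj:V->V->Prop) (HT:is_tree adj) x y : exists n, rn adj n x y.
Proof. destruct (tree_ex HT x y) as [l Hl]. eexists. apply lwalk_rn, red_lwalk; eauto. Qed.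

Lemma rn_map V (adj:V->V->Prop) f : adjp adj f -> forall n x y, rn adj n x y -> rn adj n (f x) (f y).
Proof. intros Hf n x y H; induction H; econstructor; eauto. Qed.

Lemma ball V (adj:V->V->Prop) (HLF: locally_finite adj) n : forall x, exists B, forall y, rn adj n x y -> In y B.
Proof.
  induction n as [|n IH]; intros x.
  - exists [x]. intros y H; inversion H; subst; simpl; auto.
  - destruct (HLF x) as [L HL].
    assert (exists B, forall w, In w L -> forall y, rn adj n w y -> In y B) as [B HB].
    { clear HL. induction L as [|w L IHL].
      - exists []. intros w [].
      - destruct IHL as [B' HB']. destruct (IH w) as [Bw HBw]. exists (Bw ++ B').
        intros w' [<-|Hw'] y Hy; apply in_or_app; eauto. }
    exists B. intros y H. inversion H; subst. eauto.
Qed.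

Lemma cover V (adj:V->V->Prop) (HT:is_tree adj) (HLF: locally_finite adj) v F :
  exists B, forall f, adjp adj f -> f v = v -> forall x, In x F -> In (f x) B.
Proof.
  induction F as [|x F IH].
  - exists []. intros f _ _ x [].
  - destruct IH as [B' HB']. destruct (tree_rn HT v x) as [n Hn].
    destruct (ball HLF n v) as [Bx HBx]. exists (Bx ++ B').
    intros f Af Fv y [<-|Hy]; apply in_or_app; [left|right; eauto].
    apply HBx. rewrite <- Fv. apply rn_map; auto.
Qed.

Fixpoint allLists T (B:list T) n : list (list T) :=
  match n with 0 => [[]] | S n => flat_map (fun a => map (cons a) (allLists B n)) B end.

Lemma allLists_in T (B:list T) l : (forall x, In x l -> In x B) -> In l (allLists B (length l)).
Proof.
  induction l as [|a l IH]; intros H; [simpl; auto|].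
  cbn [length allLists]. apply in_flat_map. exists a; split; [apply H; simpl; auto|]. apply in_map. apply IH. intros; apply H; simpl; auto.
Qed.

Lemma pigeon T (L:list T) : forall f : nat -> T, (forall k, In (f k) L) -> exists k l, k < l /\ f k = f l.
Proof.
  induction L as [|a L IH]; intros f H; [destruct (H 0)|].
  destruct (classic (exists k l, k < l /\ f k = a /\ f l = a)) as [[k [l [? [? ?]]]]|Hn].
  - exists k, l; split; congruence.
  - assert (exists K, forall l, K < l -> f l <> a) as [K HK].
    { destruct (classic (exists k, f k = a)) as [[k0 Hk0]|Hn'].
      - exists k0. intros l Hl E. apply Hn. exists k0, l; auto.
      - exists 0. intros l _ E. apply Hn'; eauto. }
    destruct (IH (fun n => f (n + S K))) as [k [l [Hkl E]]].
    + intros k. destruct (H (k + S K)) as [E|E]; auto. exfalso; apply (HK (k + S K)); auto; lia.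
    + exists (k + S K), (l + S K). split; auto; lia.
Qed.

Lemma map_eq_in A B (f g:A->B) l : map f l = map g l -> forall x, In x l -> f x = g x.
Proof. induction l; simpl; intros E x Hx; [destruct Hx|]. injection E; intros.
  destruct Hx as [<-|Hx]; auto. Qed.

Lemma stab_fin V (adj:V->V->Prop) (HT:is_tree adj) (HLF: locally_finite adj) (S:(V->V)->Prop)
  (HS: forall s, S s -> is_isom adj s) (Hdisc: discrete (gen_subgroup S))
  (f : nat -> V -> V) v : (forall k, gen_subgroup S (f k)) -> (forall k, f k v = v) ->
  exists k l, k < l /\ forall x, f k x = f l x.
Proof.
  intros HG Hv.
  destruct (Hdisc _ (G_id S)) as [F0 HF0].
  destruct (cover HT HLF v F0) as [B HB].
  destruct (@pigeon _ (allLists B (length F0)) (fun k => map (f k) F0)) as [k [l [Hkl E]]].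
  - intros k. rewrite <- (length_map (f k) F0). apply allLists_in.
    intros y Hy. apply in_map_iff in Hy. destruct Hy as [x [<- Hx]]. apply HB; auto.
    apply (G_adjp HS (HG k)).
  - exists k, l; split; auto.
    destruct (G_inv HS (HG k)) as [fi [Hfi [[I1 I2] _]]].
    assert (forall x, fi (f l x) = x) as Hid.
    { apply (HF0 (fun x => fi (f l x))).
      - apply G_comp; auto.
      - intros x Hx. rewrite <- (map_eq_in E Hx). auto. }
    intros x. rewrite <- (Hid x) at 1. rewrite I2. reflexivity.
Qed.

Lemma iter_inj V (A:V->V) (HA: forall x y, A x = A y -> x = y) n x y : Nat.iter n A x = Nat.iter n A y -> x = y.
Proof. revert x y; induction n; simpl; intros; auto. Qed.

Lemma elliptic_finite V (adj:V->V->Prop) (HT:is_tree adj) (HLF: locally_finite adj) (S:(V->V)->Prop)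
  (HS: forall s, S s -> is_isom adj s) (Hdisc: discrete (gen_subgroup S)) A v :
  gen_subgroup S A -> A v = v -> exists p, 0 < p /\ forall x, Nat.iter p A x = x.
Proof.
  intros HA Av.
  destruct (stab_fin HT HLF HS Hdisc (f := fun k => Nat.iter k A) (v := v)) as [k [l [Hkl E]]].
  - intros; apply G_iter; auto.
  - intros k; induction k; simpl; auto. rewrite IHk; auto.
  - exists (l - k). split; [lia|]. intros x.
    destruct (G_inv HS HA) as [B [_ [[I1 I2] _]]].
    apply (@iter_inj V A) with (n := k).
    + intros a b Hab. rewrite <- (I1 a), <- (I1 b), Hab; auto.
    + rewrite <- Nat.iter_add. replace (k + (l - k)) with l by lia. symmetry; apply E.
Qed.

Lemma iter_mul V (A:V->V) p n x : Nat.iter n (Nat.iter p A) x = Nat.iter (n*p) A x.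
Proof. induction n; simpl; auto. rewrite IHn, Nat.iter_add. auto. Qed.

Lemma inf_pow V (A:V->V) p : infinite_order A -> 0 < p -> infinite_order (Nat.iter p A).
Proof. intros H Hp n Hn. destruct (H (n*p)) as [x Hx]; [nia|]. exists x. rewrite iter_mul; auto. Qed.

Lemma iter_inv V (A B:V->V) : (forall x, A (B x) = x) -> forall p x, Nat.iter p A (Nat.iter p B x) = x.
Proof. intros H p; induction p; intros x; auto. rewrite Nat.iter_succ_r. simpl. rewrite H. auto. Qed.

Lemma inf_inv V (A B:V->V) : isinv A B -> infinite_order A -> infinite_order B.
Proof. intros [I1 I2] H n Hn. destruct (H n Hn) as [x Hx]. apply NNPP; intro Hc.
  apply Hx. assert (forall y, Nat.iter n B y = y) as E.
  { intros y; apply NNPP; intro; apply Hc; eauto. }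
  rewrite <- (E x) at 1. apply iter_inv; auto. Qed.

Lemma inv_fix V (A B:V->V) r : isinv A B -> same_end (fun n => A (r n)) r -> same_end (fun n => B (r n)) r.
Proof. intros [I1 I2] H. apply se_sym. apply (se_ext (a := fun n => B (A (r n)))); [apply (se_map B H)|]. auto. Qed.

Lemma iter_fix V (A:V->V) r : same_end (fun n => A (r n)) r -> forall p, same_end (fun n => Nat.iter p A (r n)) r.
Proof. intros H p; induction p; simpl. apply se_refl. eapply se_trans; [apply (se_map A IHp)|]; auto. Qed.

Lemma ray_map V (adj:V->V->Prop) r f : is_ray adj r -> adjp adj f -> (forall a b, f a = f b -> a = b) ->
  is_ray adj (fun n => f (r n)).
Proof. intros Hr Hf Hi n. destruct (Hr n). split; auto. Qed.

Lemma adv_comp V (f f':V->V) r k1 m1 k2 m2 : Adv f r k1 m1 -> Adv f' r k2 m2 -> Adv (fun x => f (f' x)) r (k1+k2) (m1+m2).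
Proof. intros H1 H2 n. replace (n + (k1+k2)) with ((n+k1)+k2) by lia. rewrite H2.
  replace (n + k1 + m2) with ((n+m2)+k1) by lia. rewrite H1. f_equal; lia. Qed.

Lemma adv_shift V (A:V->V) r k m K : Adv A r k m -> k <= K -> Adv A r K (K + m - k).
Proof. intros H HK n. replace (n+K) with ((n + K - k) + k) by lia. rewrite H. f_equal; lia. Qed.

Lemma isinv_inj V (A B:V->V) : isinv A B -> forall a b, A a = A b -> a = b.
Proof. intros [I1 _] a b E. rewrite <- (I1 a), <- (I1 b), E; auto. Qed.


Lemma no_three V (adj:V->V->Prop) (HT:is_tree adj) (HLF: locally_finite adj) (S:(V->V)->Prop)
  (HS: forall s, S s -> is_isom adj s) (Hdisc: discrete (gen_subgroup S)) A x y z :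
  gen_subgroup S A -> infinite_order A -> is_ray adj x -> is_ray adj y -> is_ray adj z ->
  same_end (fun n => A (x n)) x -> same_end (fun n => A (y n)) y -> same_end (fun n => A (z n)) z ->
  ~ same_end x y -> ~ same_end x z -> ~ same_end y z -> False.
Proof.
  intros HA Hinf Rx Ry Rz Fx Fy Fz N1 N2 N3.
  destruct (G_inv HS HA) as [B [_ [[I1 I2] AB]]].
  destruct (three_ends HT (G_adjp HS HA) AB I1 Rx Ry Rz Fx Fy Fz N1 N2 N3) as [v Hv].
  destruct (elliptic_finite HT HLF HS Hdisc HA Hv) as [p [Hp E]].
  destruct (Hinf p Hp) as [w Hw]. auto.
Qed.

Lemma key_pos V (adj:V->V->Prop) (HT:is_tree adj) (HLF: locally_finite adj) (S:(V->V)->Prop)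
  (HS: forall s, S s -> is_isom adj s) (Hdisc: discrete (gen_subgroup S)) A r r' g k m :
  gen_subgroup S A -> infinite_order A -> is_ray adj r -> is_ray adj r' -> ~ same_end r r' ->
  same_end (fun n => A (r' n)) r' -> Adv A r k m -> k < m ->
  gen_subgroup S g -> same_end (fun n => g (r n)) r -> same_end (fun n => g (r' n)) r'.
Proof.
  intros HA Hinf Rr Rr' Nrr' Fr' AdA Hkm Hg [kg [mg Adg]].
  destruct (G_inv HS HA) as [B [HB [[IA1 IA2] AB]]].
  destruct (G_inv HS Hg) as [gi [Hgi [[Ig1 Ig2] Agi]]].
  assert (AdB: Adv B r m k) by (apply (adv_inv IA1 AdA)).
  assert (Adgi: Adv gi r mg kg) by (apply (adv_inv Ig1 Adg)).
  set (c := fun x => g (A (gi (B x)))).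
  assert (Hc: gen_subgroup S c) by (unfold c; apply G_comp; auto; apply G_comp; auto; apply G_comp; auto).
  set (K := kg + k + mg + m).
  assert (AdC: Adv c r K K).
  { pose proof (adv_comp Adg (adv_comp AdA (adv_comp Adgi AdB))) as H.
    intros n. specialize (H n). unfold c, K.
    replace (kg + (k + (mg + m))) with (kg + k + mg + m) in H by lia.
    replace (mg + (m + (kg + k))) with (kg + k + mg + m) in H by lia. exact H. }
  assert (cfix: forall p, K <= p -> c (r p) = r p).
  { intros p Hp. replace p with ((p - K) + K) by lia. apply AdC. }
  assert (HkK: k <= K). { unfold K. rewrite <- Nat.add_assoc, <- Nat.add_assoc. apply Nat.le_trans with (k + (mg + m)); [apply Nat.le_add_r|apply Nat.le_add_l]. }
  assert (AdA': Adv A r K (K + m - k)) by (exact (adv_shift AdA HkK)).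
  set (e := fun j x => Nat.iter j B (c (Nat.iter j A x))).
  destruct (stab_fin HT HLF HS Hdisc (f := e) (v := r K)) as [j1 [j2 [Hj E]]].
  - intros j. unfold e. apply G_comp; [apply G_iter; auto|]. apply G_comp; auto. apply G_iter; auto.
  - intros j. assert (HK2: K <= K + m - k) by lia. unfold e. rewrite (adv_iter AdA' HK2 j).
    rewrite cfix; [|apply Nat.le_add_r]. rewrite <- (adv_iter AdA' HK2 j). apply iter_inv; auto.
  - set (p := j2 - j1).
    assert (Comm: forall y, Nat.iter p A (c y) = c (Nat.iter p A y)).
    { intros y. specialize (E (Nat.iter j1 B y)). unfold e in E. cbv beta in E.
      rewrite (iter_inv IA2) in E.
      apply (f_equal (Nat.iter j2 A)) in E.
      rewrite (iter_inv IA2) in E.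
      replace j2 with (p + j1) in E by (unfold p; lia).
      rewrite !Nat.iter_add in E. rewrite !(iter_inv IA2) in E. exact E. }
    assert (Hp: 0 < p) by (unfold p; lia).
    set (Ap := Nat.iter p A).
    assert (HAp: gen_subgroup S Ap) by (apply G_iter; auto).
    assert (Hinfp: infinite_order Ap) by (apply inf_pow; auto).
    assert (FA: same_end (fun n => A (r n)) r) by (exists k, m; exact AdA).
    assert (Fc: same_end (fun n => c (r n)) r) by (exists K, K; exact AdC).
    destruct (G_inv HS Hc) as [ci [Hci [[Ic1 Ic2] Aci]]].
    assert (cinj: forall a b, c a = c b -> a = b) by (apply (isinv_inj (conj Ic1 Ic2))).
    assert (Rcr': is_ray adj (fun n => c (r' n))) by (apply ray_map; auto; apply (G_adjp HS Hc)).
    assert (Ccr: same_end (fun n => c (r' n)) r').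
    { apply NNPP; intro Hn.
      apply (no_three HT HLF HS Hdisc HAp Hinfp Rr Rr' Rcr'); auto.
      - apply iter_fix; auto.
      - apply iter_fix; auto.
      - apply (se_ext (a := fun n => c (Ap (r' n)))); [|intros; unfold Ap; symmetry; apply Comm].
        apply se_map. apply iter_fix; auto.
      - intros H. apply Nrr'. apply (se_ext (a := fun n => ci (c (r n)))); [|intros; apply Ic1].
        apply se_sym. apply (se_ext (a := fun n => ci (c (r' n)))); [|intros; apply Ic1].
        apply se_map. eapply se_trans; [apply se_sym; exact H|]. apply se_sym; auto.
      - intros H; apply Hn; apply se_sym; auto. }
    set (D := fun x => g (A (gi x))).
    assert (FB: same_end (fun n => B (r' n)) r') by (apply (inv_fix (conj IA1 IA2)); auto).
    assert (FD: same_end (fun n => D (r' n)) r').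
    { eapply se_trans; [|exact Ccr]. apply se_sym.
      apply (se_map D FB). }
    assert (Hgr: gen_subgroup S gi) by auto.
    assert (Rgr: is_ray adj (fun n => gi (r' n))) by (apply ray_map; [exact Rr'| exact Agi| apply (isinv_inj (conj Ig2 Ig1))]).
    assert (Fgi: same_end (fun n => gi (r n)) r) by (apply (inv_fix (conj Ig1 Ig2)); exists kg, mg; exact Adg).
    assert (FAg: same_end (fun n => A (gi (r' n))) (fun n => gi (r' n))).
    { apply (se_ext (a := fun n => gi (D (r' n)))); [apply se_map; auto|]. intros; unfold D; apply Ig1. }
    destruct (classic (same_end (fun n => gi (r' n)) r')) as [Hy|Hn].
    + apply se_sym. apply (se_ext (a := fun n => g (gi (r' n)))); [apply se_map; auto|]. intros; apply Ig2.
    + exfalso. apply (no_three HT HLF HS Hdisc HA Hinf Rr Rr' Rgr); auto.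
      * intros H. apply Nrr'. apply (se_ext (a := fun n => g (gi (r n)))); [|intros; apply Ig2].
        apply se_sym. apply (se_ext (a := fun n => g (gi (r' n)))); [|intros; apply Ig2].
        apply se_map. eapply se_trans; [apply se_sym; exact H|]. apply se_sym; auto.
      * intros H; apply Hn; apply se_sym; auto.
Qed.

Lemma key V (adj:V->V->Prop) (HT:is_tree adj) (HLF: locally_finite adj) (S:(V->V)->Prop)
  (HS: forall s, S s -> is_isom adj s) (Hdisc: discrete (gen_subgroup S)) A r r' g :
  gen_subgroup S A -> infinite_order A -> is_ray adj r -> is_ray adj r' -> ~ same_end r r' ->
  same_end (fun n => A (r n)) r -> same_end (fun n => A (r' n)) r' ->
  gen_subgroup S g -> same_end (fun n => g (r n)) r -> same_end (fun n => g (r' n)) r'.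
Proof.
  intros HA Hinf Rr Rr' N [k [m AdA]] Fr' Hg Fg.
  destruct (lt_eq_lt_dec k m) as [[L|L]|L].
  - exact (key_pos HT HLF HS Hdisc HA Hinf Rr Rr' N Fr' AdA L Hg Fg).
  - exfalso. subst. assert (A (r m) = r m) as E by (apply (AdA 0)).
    destruct (elliptic_finite HT HLF HS Hdisc HA E) as [p [Hp Ep]].
    destruct (Hinf p Hp) as [w Hw]. auto.
  - destruct (G_inv HS HA) as [B [HB [[I1 I2] AB]]].
    apply (key_pos HT HLF HS Hdisc (A := B) (r := r) (r' := r') (k := m) (m := k)); auto.
    + apply (inf_inv (conj I1 I2)); auto.
    + apply (inv_fix (conj I1 I2)); auto.
    + apply (adv_inv I1 AdA).
Qed.

Lemma fix_transport V (f:V->V) a b : same_end (fun n => f (a n)) a -> same_end a b -> same_end (fun n => f (b n)) b.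
Proof. intros H E. eapply se_trans; [apply se_map; apply se_sym; exact E|]. eapply se_trans; eauto. Qed.

Lemma pp_transport V (f:V->V) a b a' b' : pres_pair f a b -> same_end a a' -> same_end b b' -> pres_pair f a' b'.
Proof.
  intros [[H1 H2]|[H1 H2]] Ea Eb; [left|right]; split.
  - apply (fix_transport H1 Ea).
  - apply (fix_transport H2 Eb).
  - eapply se_trans; [apply se_map; apply se_sym; exact Ea|]. eapply se_trans; eauto.
  - eapply se_trans; [apply se_map; apply se_sym; exact Eb|]. eapply se_trans; eauto.
Qed.

Lemma pp_swap V (f:V->V) a b : pres_pair f a b -> pres_pair f b a.
Proof. intros [[H1 H2]|[H1 H2]]; [left|right]; auto. Qed.

Lemma pp_sq V (f:V->V) a b : pres_pair f a b ->
  same_end (fun n => Nat.iter 2 f (a n)) a /\ same_end (fun n => Nat.iter 2 f (b n)) b.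
Proof.
  intros [[H1 H2]|[H1 H2]]; simpl; split.
  - eapply se_trans; [apply (se_map f H1)|]; auto.
  - eapply se_trans; [apply (se_map f H2)|]; auto.
  - eapply se_trans; [apply (se_map f H1)|]; auto.
  - eapply se_trans; [apply (se_map f H2)|]; auto.
Qed.

Theorem lemma3p3 (V : Type) (adj : V -> V -> Prop)
  (HT : is_tree adj) (HLF : locally_finite adj)
  (gs : list (V -> V)) (Hgs : forall g, In g gs -> is_isom adj g)
  (Hdisc : discrete (gen_subgroup (fun f => In f gs)))
  (Hne : ~ elementary adj (gen_subgroup (fun f => In f gs)))
  (h : V -> V) (hG : gen_subgroup (fun f => In f gs) h)
  (hinf : infinite_order h) :
  exists g, In g gs /\
    ~ elementary adj (gen_subgroup (fun f => f = g \/ f = h)).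
Proof.
  set (S := fun f => In f gs) in *.
  assert (HS: forall s, S s -> is_isom adj s) by exact Hgs.
  apply NNPP; intros Hall.
  assert (Hel: forall g, In g gs -> elementary adj (gen_subgroup (fun f => f = g \/ f = h))).
  { intros g Hg. apply NNPP; intro Hn. apply Hall; eauto. }
  clear Hall. apply Hne.
  set (h2 := Nat.iter 2 h).
  assert (Hh2: gen_subgroup S h2) by (apply G_iter; auto).
  assert (Hinf2: infinite_order h2) by (apply inf_pow; auto).
  assert (hIn: forall g, gen_subgroup (fun f => f = g \/ f = h) h) by (intros; apply G_gen; auto).
  assert (gIn: forall g, gen_subgroup (fun f => f = g \/ f = h) g) by (intros; apply G_gen; auto).
  assert (Hnov: forall v, h v = v -> False).
  { intros v E. destruct (elliptic_finite HT HLF HS Hdisc hG E) as [p [Hp Ep]].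
    destruct (hinf p Hp) as [w Hw]. auto. }
  assert (Hcls: forall g, In g gs ->
     (exists z, is_ray adj z /\ same_end (fun n => g (z n)) z /\ same_end (fun n => h (z n)) z) \/
     (exists z z', is_ray adj z /\ is_ray adj z' /\ ~ same_end z z' /\ pres_pair g z z' /\ pres_pair h z z')).
  { intros g Hg. destruct (Hel g Hg) as [[v Hv]|[[z [Rz Fz]]|[z [z' [Rz [Rz' [N Fzz]]]]]]].
    - exfalso. apply (Hnov v). apply Hv; apply hIn.
    - left. exists z; split; [exact Rz|split; [apply Fz; apply gIn| apply Fz; apply hIn]].
    - right. exists z, z'; split; [exact Rz|split; [exact Rz'|split; [exact N|split; [apply Fzz; apply gIn| apply Fzz; apply hIn]]]]. }
  destruct (classic (exists e e', is_ray adj e /\ is_ray adj e' /\ ~ same_end e e' /\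
       same_end (fun n => h2 (e n)) e /\ same_end (fun n => h2 (e' n)) e')) as
    [[e [e' [Re [Re' [Nee' [Fe Fe']]]]]]|HnA].
  -
    right; right. exists e, e'. split; [exact Re|split; [exact Re'|split; [exact Nee'|]]].
    change (forall f, gen_subgroup S f -> pres_pair f e e'). apply G_fix_pair. intros s Hs.
    destruct (Hcls s Hs) as [[z [Rz [Fsz Fhz]]]|[z [z' [Rz [Rz' [Nzz' [Ps Ph]]]]]]].
    + assert (Fh2z: same_end (fun n => h2 (z n)) z) by (apply iter_fix; auto).
      destruct (classic (same_end z e)) as [Eze|Nze].
      * left. assert (Fse: same_end (fun n => s (e n)) e) by (apply (fix_transport Fsz Eze)).
        split; auto.
        apply (key HT HLF HS Hdisc Hh2 Hinf2 Re Re' Nee' Fe Fe'); auto. apply G_gen; auto.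
      * destruct (classic (same_end z e')) as [Eze'|Nze'].
        -- left. assert (Fse: same_end (fun n => s (e' n)) e') by (apply (fix_transport Fsz Eze')).
           split; auto.
           apply (key HT HLF HS Hdisc Hh2 Hinf2 Re' Re (fun H => Nee' (se_sym H)) Fe' Fe); auto. apply G_gen; auto.
        -- exfalso. apply (no_three HT HLF HS Hdisc Hh2 Hinf2 Re Re' Rz Fe Fe' Fh2z Nee');
           intros H; [apply Nze|apply Nze']; apply se_sym; auto.
    + destruct (pp_sq Ph) as [Fz Fz'].
      assert (C: forall y, is_ray adj y -> same_end (fun n => h2 (y n)) y -> same_end y e \/ same_end y e').
      { intros y Ry Fy. apply NNPP; intro Hn. apply (no_three HT HLF HS Hdisc Hh2 Hinf2 Re Re' Ry Fe Fe' Fy Nee');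
        intros H; apply Hn; [left|right]; apply se_sym; auto. }
      destruct (C z Rz Fz) as [E1|E1]; destruct (C z' Rz' Fz') as [E2|E2].
      * exfalso. apply Nzz'. eapply se_trans; [exact E1|apply se_sym; exact E2].
      * apply (pp_transport Ps E1 E2).
      * apply pp_swap. apply (pp_transport Ps E1 E2).
      * exfalso. apply Nzz'. eapply se_trans; [exact E1|apply se_sym; exact E2].
  -
    destruct gs as [|g1 gs'] eqn:Egs.
    + left. destruct (hinf 1 (le_n _)) as [x _]. exists x. intros f Hf.
      revert f Hf. apply (gen_ind (S := S)).
      * auto.
      * intros s f Hs; destruct Hs.
      * intros s t f Hs; destruct Hs.
      * intros f g E1 E2; rewrite <- E2; auto.
    + right; left.
      assert (NoPair: forall s, In s gs -> ~ exists z z', is_ray adj z /\ is_ray adj z' /\ ~ same_end z z' /\ pres_pair s z z' /\ pres_pair h z z').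
      { intros s _ [z [z' [Rz [Rz' [Nzz' [_ Ph]]]]]]. destruct (pp_sq Ph). apply HnA.
        exists z, z'; split; [exact Rz|split; [exact Rz'|split; [exact Nzz'|split; auto]]]. }
      rewrite <- Egs in Hcls.
      destruct (Hcls g1 (ltac:(rewrite Egs; simpl; auto))) as [[z1 [Rz1 [_ Fhz1]]]|P].
      2:{ exfalso. apply (NoPair g1); auto. rewrite Egs; simpl; auto. }
      exists z1. split; [exact Rz1|].
      change (forall f, gen_subgroup S f -> same_end (fun n => f (z1 n)) z1). apply G_fix_end. intros s Hs.
      assert (Hs' : In s gs) by (rewrite Egs; exact Hs).
      destruct (Hcls s Hs') as [[z [Rz [Fsz Fhz]]]|P]; [|exfalso; apply (NoPair s Hs' P)].
      destruct (classic (same_end z z1)) as [E|Nz].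
      * apply (fix_transport Fsz E).
      * exfalso. apply HnA. exists z1, z. split; [exact Rz1|split; [exact Rz|split]].
        -- intros H; apply Nz; apply se_sym; auto.
        -- split; apply iter_fix; auto.
Qed.
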